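(* Let $n>3$ be an integer. The inverse of the circulant matrix $\mathrm{circ}(3,1,0,\ldots,0,1)$ of order $n$ is \[[\mathrm{circ}(3,1,0,\ldots,0,1)]^{-1}=\mathrm{circ}(a_0,a_1,\ldots,a_{n-1}),\] where for $j=0,1,\ldots,n-1$, \[a_j=\frac{2^{n-j}}{\sqrt{5}}\left[\frac{(-3+\sqrt{5})^j}{2^n-(-3+\sqrt{5})^n}-\frac{(-3-\sqrt{5})^j}{2^n-(-3-\sqrt{5})^n}\right].\]
   Context: For $c_0,\dots,c_{k-1}$, $\mathrm{circ}(c_0,\ldots,c_{k-1})$ denotes the $k\times k$ circulant matrix whose $(i,j)$-entry is $c_{(j-i)\bmod k}$ (first row $c_0,\dots,c_{k-1}$, each subsequent row the cyclic right shift of the previous one). Thus $\mathrm{circ}(3,1,0,\ldots,0,1)$ has $3$ on the diagonal, $1$ on the two cyclically adjacent positions, and $0$ elsewhere. *)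

(* Defs.v *)
From mathcomp Require Import all_boot all_order all_algebra.
Set Implicit Arguments. Unset Strict Implicit. Unset Printing Implicit Defensive.
Import Order.TTheory GRing.Theory Num.Theory.
Local Open Scope ring_scope.

(* circ n c : the n x n circulant matrix whose (i,j) entry is c ((j - i) mod n),
   the first row being c 0, ..., c (n-1). *)
Definition circ (R : ringType) (n : nat) (c : nat -> R) : 'M[R]_n :=
  \matrix_(i < n, j < n) c ((n + j - i) %% n)%N.

Definition c311 (R : ringType) (n : nat) (k : nat) : R :=
  if k == 0%N then 3 else if (k == 1%N) || (k == n.-1) then 1 else 0.

Definition a_coef (R : rcfType) (n j : nat) : R :=
  let s := Num.sqrt (5 : R) in
  (2 ^+ (n - j) / s) *
  ((-3 + s) ^+ j / (2 ^+ n - (-3 + s) ^+ n)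
   - (-3 - s) ^+ j / (2 ^+ n - (-3 - s) ^+ n)).

(* Main.v *)
Require Import Defs.
From mathcomp Require Import all_boot all_order all_algebra.
From mathcomp Require Import zify ring lra.
Import Order.TTheory GRing.Theory Num.Theory.
Local Open Scope ring_scope.

Lemma key_r (R : fieldType) (r : R) (p : nat) :
  r * r = - (3 * r) - 1 -> 1 - r ^+ p.+3 != 0 ->
  [/\ forall m, (m.+2 < p.+3)%N ->
        3 * (r ^+ m.+1 / (1 - r ^+ p.+3)) + r ^+ m / (1 - r ^+ p.+3)
          + r ^+ m.+2 / (1 - r ^+ p.+3) = 0,
     3 * (r ^+ 0 / (1 - r ^+ p.+3)) + r ^+ p.+2 / (1 - r ^+ p.+3)
          + r ^+ 1 / (1 - r ^+ p.+3) = r + 3 &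
     3 * (r ^+ p.+2 / (1 - r ^+ p.+3)) + r ^+ p.+1 / (1 - r ^+ p.+3)
          + r ^+ 0 / (1 - r ^+ p.+3) = 1].
Proof.
move=> hr hd; split.
- move=> m _. set d := 1 - r ^+ p.+3.
  have -> : 3 * (r ^+ m.+1 / d) + r ^+ m / d
          + r ^+ m.+2 / d = r ^+ m * (r * r + 3 * r + 1) / d
    by rewrite !exprS; field.
  rewrite hr. have -> : - (3 * r) - 1 + 3 * r + 1 = 0 by ring.
  by rewrite mulr0 mul0r.
- set x := r ^+ p.+2.
  have ex : r ^+ p.+3 = r * x by rewrite exprS.
  rewrite ex in hd *.
  have -> : 3 * (r ^+ 0 / (1 - r * x)) + x / (1 - r * x) + r ^+ 1 / (1 - r * x)
     = (3 + r + x) / (1 - r * x) by rewrite expr0 expr1; field.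
  have -> : 3 + r + x = (r + 3) * (1 - r * x).
    have -> : (r + 3) * (1 - r * x) = r + 3 - (r * r) * x - 3 * r * x by ring.
    rewrite hr; ring.
  by rewrite mulrK // unitfE.
- set y := r ^+ p.+1.
  have ex : r ^+ p.+3 = r * (r * y) by rewrite /y !exprS.
  have ex2 : r ^+ p.+2 = r * y by rewrite /y !exprS.
  rewrite ex ex2 in hd *.
  have -> : 3 * (r * y / (1 - r * (r * y))) + y / (1 - r * (r * y)) + r ^+ 0 / (1 - r * (r * y))
     = (3 * (r * y) + y + 1) / (1 - r * (r * y)) by rewrite expr0; field.
  have -> : 3 * (r * y) + y + 1 = 1 - r * (r * y).
    have -> : 1 - r * (r * y) = 1 - (r * r) * y by ring.
    rewrite hr; ring.
  by rewrite divff.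
Qed.

Section S.
Variable R : rcfType.
Let s : R := Num.sqrt 5.
Let r : R := (-3 + s) / 2.
Let w : R := (-3 - s) / 2.

Lemma s_facts : s * s = 5 /\ 2 < s /\ s < 3.
Proof.
have h5 : s * s = 5 by rewrite -expr2 sqr_sqrtr // ler0n.
have h0 : 0 <= s by rewrite sqrtr_ge0.
split => //; split; nra.
Qed.

Lemma r_rel : r * r = - (3 * r) - 1.
Proof. have [h _] := s_facts. rewrite /r.
have -> : (-3 + s) / 2 * ((-3 + s) / 2) = (9 - 6 * s + s * s) / 4 by field.
by rewrite h; field. Qed.

Lemma w_rel : w * w = - (3 * w) - 1.
Proof. have [h _] := s_facts. rewrite /w.
have -> : (-3 - s) / 2 * ((-3 - s) / 2) = (9 + 6 * s + s * s) / 4 by field.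
by rewrite h; field. Qed.

Lemma r_nz n : (0 < n)%N -> 1 - r ^+ n != 0.
Proof.
move=> hn; have [_ [h1 h2]] := s_facts.
rewrite subr_eq0; apply/eqP => e.
have hr1 : `|r| < 1 by rewrite /r ltr_norml; apply/andP; split; lra.
have : `|r ^+ n| < 1 by rewrite normrX exprn_ilt1 //; lia.
by rewrite -e normr1 ltxx.
Qed.

Lemma w_nz n : (0 < n)%N -> 1 - w ^+ n != 0.
Proof.
move=> hn; have [_ [h1 h2]] := s_facts.
rewrite subr_eq0; apply/eqP => e.
have hw1 : 1 < `|w| by rewrite /w ltr0_norm; lra.
have : 1 < `|w ^+ n| by rewrite normrX exprn_egt1 //; lia.
by rewrite -e normr1 ltxx.
Qed.

Lemma a_eq n j : (0 < n)%N -> (j <= n)%N ->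
  a_coef R n j = (r ^+ j / (1 - r ^+ n) - w ^+ j / (1 - w ^+ n)) / s.
Proof.
move=> hn hj; have [_ [h1 h2]] := s_facts.
have hs : s != 0 by apply/eqP => e; rewrite e in h1; lra.
rewrite /a_coef -/s.
have -> : -3 + s = 2 * r by rewrite /r; field.
have -> : -3 - s = 2 * w by rewrite /w; field.
rewrite !(exprMn _ 2 r) !(exprMn _ 2 w).
have P : (2 : R) ^+ (n - j) != 0 by rewrite expf_neq0 // pnatr_eq0.
have Q : (2 : R) ^+ j != 0 by rewrite expf_neq0 // pnatr_eq0.
have hr := r_nz n hn; have hw := w_nz n hn.
have -> : (2 : R) ^+ n - 2 ^+ n * r ^+ n = 2 ^+ (n - j) * 2 ^+ j * (1 - r ^+ n)
  by rewrite -exprD subnK //; ring.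
have -> : (2 : R) ^+ n - 2 ^+ n * w ^+ n = 2 ^+ (n - j) * 2 ^+ j * (1 - w ^+ n)
  by rewrite -exprD subnK //; ring.
field; rewrite ?P ?Q ?hr ?hw ?hs //.
Qed.

Lemma a_rec n d : (3 < n)%N -> (d < n)%N ->
  3 * a_coef R n d + a_coef R n (if d == 0%N then n.-1 else d.-1)
    + a_coef R n (if d == n.-1 then 0%N else d.+1) = (d == 0%N)%:R.
Proof.
case: n => [|[|[|[|p]]]] // _; set q := p.+1.
move=> hd.
have hn : (0 < q.+3)%N by [].
have [_ [h1 h2]] := s_facts.
have hs : s != 0 by apply/eqP => e; rewrite e in h1; lra.
have [Kr1 Kr2 Kr3] := @key_r _ _ _ r_rel (r_nz q.+3 hn).
have [Kw1 Kw2 Kw3] := @key_r _ _ _ w_rel (w_nz q.+3 hn).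
have E : forall x y z x' y' z' : R,
  3*((x - x')/s) + (y-y')/s + (z-z')/s = ((3*x+y+z) - (3*x'+y'+z'))/s
  by move=> *; field.
rewrite !a_eq //; try (case: ifP => _ /=; lia).
rewrite E.
case: eqP => [->|d0].
  rewrite /= Kr2 Kw2.
  have -> : r + 3 - (w + 3) = s by rewrite /r /w; field.
  by rewrite divff.
case: eqP => [dl|dl].
  rewrite dl /= Kr3 Kw3 subrr mul0r; done.
case: d hd d0 dl => [//|m] hm _ dl /=.
rewrite Kr1 ?Kw1 ?subrr ?mul0r //. all: try lia.
Qed.
End S.

Lemma modn2 (x n : nat) : (x < n + n)%N ->
  ((x < n)%N /\ (x %% n = x)%N) \/ ((n <= x)%N /\ (x %% n = x - n)%N).
Proof.
move=> h; case: (ltnP x n) => h'.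
  by left; split => //; rewrite modn_small.
right; split => //.
rewrite -{1}(subnK h') modnDr modn_small //; lia.
Qed.

Ltac gen_mod n := repeat match goal with |- context [(?x %% n)%N] =>
  let H := fresh in have H := @modn2 x n ltac:(lia); move: H;
  generalize (x %% n)%N end; intros.

Theorem mainTheorem3 (R : rcfType) (n : nat) (hn : (3 < n)%N) :
  circ n (c311 R n) \in unitmx /\
  invmx (circ n (c311 R n)) = circ n (a_coef R n).
Proof.
have n0 : (0 < n)%N by lia.
set C := circ n (c311 R n). set A := circ n (a_coef R n).
have H : C *m A = 1%:M.
  apply/matrixP => i k.
  rewrite !mxE.
  under eq_bigr do rewrite !mxE.
  have hi := ltn_ord i; have hk := ltn_ord k.
  pose j1 := Ordinal (ltn_pmod i.+1 n0).
  pose j2 := Ordinal (ltn_pmod (i + n.-1) n0).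
  have e1 : j1 != i by rewrite -val_eqE /=; gen_mod n; lia.
  have e2 : (j2 != i) && (j2 != j1) by rewrite -!val_eqE /=; gen_mod n; lia.
  rewrite (bigD1 i) // (bigD1 j1) // (bigD1 j2) //=.
  rewrite big1 ?addr0; last first.
    move=> j /andP[/andP[h1 h2] h3].
    rewrite -!val_eqE /= in h1 h2 h3.
    have hj := ltn_ord j.
    rewrite /c311.
    have v1 : ((n + j - i) %% n != 0)%N by move: h2 h3; gen_mod n; intros; lia.
    have v2 : ((n + j - i) %% n != 1)%N by move: h2 h3; gen_mod n; intros; lia.
    have v3 : ((n + j - i) %% n != n.-1)%N by move: h2 h3; gen_mod n; intros; lia.
    by rewrite (negPf v1) (negPf v2) (negPf v3) mul0r.
  have -> : ((n + i - i) %% n = 0)%N by rewrite addnK modnn.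
  have -> : ((n + i.+1 %% n - i) %% n = 1)%N by gen_mod n; lia.
  have -> : ((n + (i + n.-1) %% n - i) %% n = n.-1)%N by gen_mod n; lia.
  have -> : c311 R n 0 = 3 by [].
  have -> : c311 R n 1 = 1 by rewrite /c311 /=.
  have -> : c311 R n n.-1 = 1.
    rewrite /c311 eqxx orbT; case: ifP => // /eqP; lia.
  have hd : ((n + k - i) %% n < n)%N by rewrite ltn_mod.
  have := @a_rec R n _ hn hd.
  have -> : ((n + k - i.+1 %% n) %% n)%N =
     (if (n + k - i) %% n == 0 then n.-1 else ((n + k - i) %% n).-1)%N.
    gen_mod n; case: ifP => /eqP; lia.
  have -> : ((n + k - (i + n.-1) %% n) %% n)%N =
     (if (n + k - i) %% n == n.-1 then 0 else ((n + k - i) %% n).+1)%N.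
    gen_mod n; case: ifP => /eqP; lia.
  have -> : (i == k) = ((n + k - i) %% n == 0)%N.
    rewrite -val_eqE /=; apply/eqP/eqP; gen_mod n; lia.
  by rewrite !mul1r addrA.
have [hC _] := mulmx1_unit H.
split => //.
by rewrite -[invmx C]mulmx1 -H mulmxA mulVmx // mul1mx.
Qed.
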